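(* Let $G$ be a finite simple graph with $|E(G)| \le 2|V(G)| - 1$ and minimum degree $\delta(G) \ge 2$. Then there exists a vertex $v$ of $G$, with $k = \deg(v)$, such that at least one of the following holds: (B1) $k = 2$; (B2) $k = 3$ and at least two neighbours of $v$ have degree at most $4$; (B3) $k = 5$ and at least three neighbours of $v$ have degree at most $3$; (B4) $k = 6$ and at least five neighbours of $v$ have degree at most $3$; (B5) $k \ge 7$ and all $k$ neighbours of $v$ have degree at most $3$. *)

(* Defs.v *)
From mathcomp Require Import all_boot.
Set Implicit Arguments. Unset Strict Implicit. Unset Printing Implicit Defensive.

Definition simple_graph (T : finType) (e : rel T) : Prop :=
  symmetric e /\ irreflexive e.

Definition nbhd (T : finType) (e : rel T) (v : T) : {set T} := [set u | e v u].
Definition deg (T : finType) (e : rel T) (v : T) : nat := #|nbhd e v|.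
Definition edges (T : finType) (e : rel T) : {set {set T}} :=
  [set [set x; y] | x in T, y in T & e x y].

(* Main.v *)
Require Import Defs.
From mathcomp Require Import all_boot zify.
Lemma card_sum (T : finType) (P : pred T) : #|[set x | P x]| = \sum_x (P x : nat).
Proof. rewrite -sum1_card big_mkcond /=. apply eq_bigr => x _; rewrite inE; by case: (P x). Qed.

Lemma handshake (T : finType) (e : rel T) : simple_graph e -> \sum_v deg e v <= 2 * #|edges e|.
Proof.
move=> [sym irr].
have -> : \sum_v deg e v = #|[set p : T*T | e p.1 p.2]|.
  rewrite card_sum. transitivity (\sum_v \sum_u (e v u : nat)).
    by apply eq_bigr => v _; rewrite /deg /nbhd card_sum.
  by rewrite pair_big.
set P := [set p : T * T | e p.1 p.2].
pose f := fun p : T*T => ([set p.1; p.2], enum_rank p.1 < enum_rank p.2).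
rewrite -(card_in_imset (f:=f)); last first.
  move=> [x y] [x' y']; rewrite !inE /= => hxy hxy' [hs hr].
  have hx : x \in [set x'; y'] by rewrite -hs !inE eqxx.
  have hy : y \in [set x'; y'] by rewrite -hs !inE eqxx orbT.
  have nxy : x != y by apply/eqP => exy; move: hxy; rewrite exy irr.
  have nxy' : x' != y' by apply/eqP => exy; move: hxy'; rewrite exy irr.
  move: hx hy; rewrite !inE => /orP [/eqP hx1 | /eqP hx1] /orP [/eqP hy1 | /eqP hy1].
  - by move: nxy; rewrite hx1 hy1 eqxx.
  - by rewrite hx1 hy1.
  - subst x y. exfalso.
    have hne : enum_rank x' <> enum_rank y'.
      by move=> /enum_rank_inj h; rewrite h eqxx in nxy'.
    move: hr; case: (ltngtP (enum_rank x') (enum_rank y')) => // /val_inj h _; exact: hne h.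
  - by move: nxy; rewrite hx1 hy1 eqxx.
apply: leq_trans (subset_leq_card (_ : f @: P \subset setX (edges e) setT)) _.
  apply/subsetP => _ /imsetP [p hp ->]; rewrite !inE andbT.
  apply/imset2P; exists p.1 p.2 => //. by rewrite inE; move: hp; rewrite inE.
by rewrite cardsX cardsT card_bool mulnC.
Qed.

Lemma local k L3 L4 H5 a b : 3 <= k -> k = L4 + H5 -> L3 <= k -> (k = 3 -> L4 <= 1) ->
  (k = 5 -> L3 <= 2) -> (k = 6 -> L3 <= 4) -> (7 <= k -> L3 <> k) ->
  a = (if 5 <= k then L3 else 0) -> b = (if k == 3 then H5 else 0) -> 8 + a <= 2*k + b.
Proof.
move=> h3 hk hL h3' h5 h6 h7 -> ->.
case: (ltnP k 5) => hk5.
  case: eqP => hk3; last by lia.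
  have := h3' hk3; lia.
have -> : (k == 3) = false by apply/eqP; lia.
have : k = 5 \/ k = 6 \/ 7 <= k by lia.
case=> [/[dup] ? /h5|[/[dup] ? /h6| /[dup] ? /h7]]; lia.
Qed.

Theorem lemma4 (T : finType) (e : rel T) :
  simple_graph e ->
  #|edges e| + 1 <= 2 * #|T| ->
  (forall v : T, 2 <= deg e v) ->
  exists v : T,
    let k := deg e v in
    let low d := #|[set u in nbhd e v | deg e u <= d]| in
    k = 2 \/
    (k = 3 /\ 2 <= low 4) \/
    (k = 5 /\ 3 <= low 3) \/
    (k = 6 /\ 5 <= low 3) \/
    (7 <= k /\ low 3 = k).
Proof.
move=> hg hE hdeg; have [sym irr] := hg.
pose L d v := \sum_u ((e v u) && (deg e u <= d) : nat).
have hlow : forall d v, #|[set u in nbhd e v | deg e u <= d]| = L d v.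
  move=> d v; rewrite (@card_sum T (fun u => (u \in nbhd e v) && (deg e u <= d))).
  by apply eq_bigr => u _; rewrite /nbhd inE.
have hdg : forall v, deg e v = \sum_u (e v u : nat).
  by move=> v; rewrite /deg /nbhd card_sum.
have hsplit : forall v, deg e v = L 4 v + \sum_u ((e v u) && (5 <= deg e u) : nat).
  move=> v; rewrite hdg -big_split; apply eq_bigr => u _ /=.
  by case: (e v u) => //=; lia.
have hLk : forall d v, L d v <= deg e v.
  by move=> d v; rewrite /L [deg e v]hdg; apply leq_sum => u _; case: (e v u) => //=; lia.
case: (boolP [exists v, [|| deg e v == 2, (deg e v == 3) && (2 <= L 4 v),
   (deg e v == 5) && (3 <= L 3 v), (deg e v == 6) && (5 <= L 3 v)
   | (7 <= deg e v) && (L 3 v == deg e v)]]).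
  case/existsP => v H; exists v => /=; rewrite !hlow.
  case/orP: H => [/eqP H|/orP [/andP [/eqP H1 H2]|/orP [/andP [/eqP H1 H2]|/orP [/andP [/eqP H1 H2]|/andP [H1 /eqP H2]]]]]; tauto.
rewrite negb_exists => /forallP hn; exfalso.
have h3 : forall v, 3 <= deg e v.
  by move=> v; have := hdeg v; have := hn v; rewrite !negb_or => /andP [h2 _]; lia.
pose f u v : nat := e u v && (deg e u == 3) && (5 <= deg e v).
have key : forall v, 8 + \sum_u f u v <= 2 * deg e v + \sum_u f v u.
  move=> v; have := hn v; rewrite !negb_or => /and5P [h2 hb3 hb5 hb6 hb7].
  apply: (@local (deg e v) (L 3 v) (L 4 v) (\sum_u ((e v u) && (5 <= deg e u) : nat))).
  - exact: h3.
  - exact: hsplit.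
  - exact: hLk.
  - by move=> hk; move: hb3; rewrite hk /=; lia.
  - by move=> hk; move: hb5; rewrite hk /=; lia.
  - by move=> hk; move: hb6; rewrite hk /=; lia.
  - by move=> hk; move: hb7; rewrite hk /=; lia.
  - case: (leqP 5 (deg e v)) => h.
      apply eq_bigr => u _; rewrite /f sym h andbT.
      by rewrite eqn_leq h3 andbT.
    by apply big1 => u _; rewrite /f leqNgt h andbF.
  - case: eqP => h.
      by apply eq_bigr => u _; rewrite /f h eqxx andbT.
    apply big1 => u _; rewrite /f.
    by move/eqP/negbTE: h => h; rewrite h andbF.
have Hs : \sum_v (8 + \sum_u f u v) <= \sum_v (2 * deg e v + \sum_u f v u)
  by apply: leq_sum => v _; exact: key.
move: Hs; rewrite !big_split /= big1_eq addn0.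
rewrite exchange_big /= sum_nat_const.
have := @handshake T e hg.
move: hE.
set A := \sum_j \sum_i f j i. set B := \sum_i \sum_u f i u.
have -> : A = B by [].
set D := \sum_i deg e i.
set N := #|T|.
lia.
Qed.
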